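(* Fix $\beta>0$ and a transient MDP with a sink state as in the context. Let $\pi=(\bm d)_\infty\in\Pi_{\mathrm{SR}}$. Then there exists a vector $\bm f\in\mathbb R^S$ with $\bm f\ge\bm 0$, $\bm f\neq\bm 0$, $\bm f^\top\bm B^{\bm d}=\rho(\bm B^{\bm d})\,\bm f^\top$, and \[ \bm f^\top\bm b^{\bm d}>0. \]
   Context: MDP: states $\mathcal S=\{1,\dots,S\}$ plus sink state $e$ ($p(e,a,e)=1$, $r(e,a,e)=0$); finite actions; transitions $p(s,a,s')$, real rewards $r(s,a,s')$. Transience (standing assumption): for every stationary deterministic policy $\pi$, $\sum_{t\ge0}\mathbb P^{\pi,s}[\tilde s_t=s']<\infty$ for all $s,s'\in\mathcal S$. $\Pi_{\mathrm{SR}}$: stationary randomized policies $(\bm d)_\infty$, $d_a(s)$ the probability of action $a$ in $s$. $B^{\bm d}_{s,s'}=\sum_a p(s,a,s')d_a(s)e^{-\beta r(s,a,s')}$, $b^{\bm d}_s=\sum_a p(s,a,e)d_a(s)e^{-\beta r(s,a,e)}$; $\rho$ is the spectral radius. *)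

(* Defs.v *)
From HB Require Import structures.
From mathcomp Require Import all_boot all_order all_algebra.
From mathcomp Require Import all_classical all_reals.
From mathcomp Require Import topology ereal normedtype sequences exp.
From mathcomp Require Import complex.

Set Implicit Arguments.
Unset Strict Implicit.
Unset Printing Implicit Defensive.

Import Order.TTheory GRing.Theory Num.Theory.
Local Open Scope ring_scope.

(* States of S are ['I_S]; the full state space is [option 'I_S], where
   [None] is the sink state [e].
   The sink's dynamics (p(e,a,e)=1, r(e,a,e)=0) are built in below. *)

Section MDP.
Variable R : realType.
Variables S A : nat.
Implicit Types (p r : 'I_S -> 'I_A -> option 'I_S -> R).

Definition is_transition p : Prop :=
  (forall s a y, 0 <= p s a y) /\ (forall s a, \sum_(y : option 'I_S) p s a y = 1).

(* d is a (randomized) decision rule: d a s in the paper is [d s a] here *)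
Definition is_decision_rule (d : 'I_S -> 'I_A -> R) : Prop :=
  (forall s a, 0 <= d s a) /\ (forall s, \sum_(a : 'I_A) d s a = 1).

Definition det_trans p (pol : 'I_S -> 'I_A) (x y : option 'I_S) : R :=
  match x with
  | None => (y == None)%:R
  | Some s => p s (pol s) y
  end.

(* [state_dist p pol s t y] = P^{pol,s}[ s_t = y ] *)
Fixpoint state_dist p (pol : 'I_S -> 'I_A) (s : 'I_S) (t : nat) (y : option 'I_S) : R :=
  match t with
  | 0 => (y == Some s)%:R
  | t'.+1 => \sum_(x : option 'I_S) state_dist p pol s t' x * det_trans p pol x y
  end.

Definition transient p : Prop :=
  forall (pol : 'I_S -> 'I_A) (s s' : 'I_S),
    (\sum_(0 <= t <oo) (state_dist p pol s t (Some s'))%:E < +oo)%E.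

Definition Bmat (beta : R) p r (d : 'I_S -> 'I_A -> R) : 'M[R]_S :=
  \matrix_(s, s') \sum_(a : 'I_A)
     p s a (Some s') * d s a * expR (- (beta * r s a (Some s'))).

Definition bvec (beta : R) p r (d : 'I_S -> 'I_A -> R) : 'cV[R]_S :=
  \col_s \sum_(a : 'I_A) p s a None * d s a * expR (- (beta * r s a None)).

End MDP.

Definition spectral_radius (R : realType) (n : nat) (M : 'M[R]_n) : R :=
  sup [set complex.Re `|l| | l in
        [set l : R[i] | eigenvalue (map_mx (real_complex R) M) l]]%classic.

(* Main.v *)
Require Import Defs.
From HB Require Import structures.
From mathcomp Require Import all_boot all_order all_algebra.
From mathcomp Require Import all_classical all_reals.
From mathcomp Require Import topology ereal normedtype sequences exp derive.
From mathcomp Require Import complex.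
From mathcomp Require Import ring lra.
Import Order.TTheory GRing.Theory Num.Theory.
Import numFieldTopology.Exports numFieldNormedType.Exports.
Local Open Scope ring_scope.
Local Open Scope classical_set_scope.
Lemma row_nz {T : zmodType} {n} {x : 'rV[T]_n} : x != 0 -> exists j, x ord0 j != 0.
Proof.
move=> xn0; case/boolP: [exists j, x ord0 j != 0] => [/existsP[j hj]|/existsPn H].
  by exists j.
exfalso; move/negP: xn0; apply; apply/eqP/rowP => j.
by move: (H j); rewrite negbK => /eqP ->; rewrite mxE.
Qed.

Section Alg.
Context {R : realType}.

Definition simplex {n} : set 'rV[R]_n :=
  [set x | (forall j, 0 <= x ord0 j) /\ \sum_j x ord0 j = 1].
Definition cw {n} (B : 'M[R]_n) (x : 'rV[R]_n) (t : R) :=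
  forall j, t * x ord0 j <= (x *m B) ord0 j.



Lemma simplex_le1 {n} {x : 'rV[R]_n} {i : 'I_n} : simplex x -> (x ord0 i <= 1)%R.
Proof.
move=> [x0 x1]; rewrite -x1 (bigD1 i) //= lerDl.
by apply: sumr_ge0 => j _; exact: x0.
Qed.

Lemma simplex_pos {n} {x : 'rV[R]_n} : simplex x -> exists i, 0 < x ord0 i.
Proof.
move=> [x0 x1]; case/boolP: [exists i, 0 < x ord0 i] => [/existsP[i hi]|/existsPn H].
  by exists i.
exfalso; have : \sum_j x ord0 j = 0.
  apply: big1 => j _; apply/eqP; rewrite eq_le x0 andbT.
  by move: (H j); rewrite -leNgt.
by rewrite x1 => /eqP; rewrite oner_eq0.
Qed.

Lemma cw_bound {n} {B : 'M[R]_n} {x : 'rV[R]_n} {t} : (forall i j, 0 <= B i j) ->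
  simplex x -> cw B x t -> t <= \sum_i \sum_j B i j.
Proof.
move=> B0 xs hcw; have [x0 x1] := xs.
have -> : t = \sum_j t * x ord0 j by rewrite -mulr_sumr x1 mulr1.
apply: (@le_trans _ _ (\sum_j (x *m B) ord0 j)).
  by apply: ler_sum => j _; exact: hcw.
rewrite exchange_big /=; apply: ler_sum => j _; rewrite mxE.
apply: ler_sum => i _; rewrite -[leRHS]mul1r; apply: ler_wpM2r => //.
exact: simplex_le1.
Qed.

Lemma normalize {n} {B : 'M[R]_n} {x : 'rV[R]_n} {t} : (forall j, 0 <= x ord0 j) -> x != 0 ->
  cw B x t -> exists y, simplex y /\ cw B y t.
Proof.
move=> x0 xn0 hcw; have [j0 hj0] := row_nz xn0.
set s := \sum_j x ord0 j.
have sp : 0 < s.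
  rewrite /s (bigD1 j0) //=; apply: ltr_pwDl.
    by rewrite lt_def hj0 x0.
  by apply: sumr_ge0 => j _; exact: x0.
exists (s^-1 *: x); split; first split.
- by move=> j; rewrite mxE mulr_ge0 // invr_ge0 ltW.
- under eq_bigr do rewrite mxE; by rewrite -mulr_sumr mulVf // gt_eqF.
- move=> j; rewrite -scalemxAl !mxE mulrCA; apply: ler_wpM2l.
    by rewrite invr_ge0 ltW.
  by have := hcw j; rewrite mxE.
Qed.

End Alg.
Section Cplx.
Context {R : realType}.
Local Open Scope complex_scope.

Definition nm (z : R[i]) : R := complex.Re `|z|.

Lemma ge0_realE (z : R[i]) : 0 <= z -> z = (complex.Re z)%:C.
Proof.
move=> z0; have hi := ger0_Im z0.
by case: z hi z0 => a b /= -> _.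
Qed.

Lemma normE (z : R[i]) : `|z| = (nm z)%:C.
Proof. by rewrite /nm -ge0_realE. Qed.

Lemma nm_ge0 z : 0 <= nm z.
Proof. by rewrite -ler0c -normE. Qed.

Lemma nmM a b : nm (a * b) = nm a * nm b.
Proof. by rewrite /nm normrM !normE -rmorphM. Qed.

Lemma nm_real (x : R) : 0 <= x -> nm x%:C = x.
Proof. by move=> x0; rewrite /nm ger0_norm // ler0c. Qed.

Lemma nm_eq0 z : nm z = 0 -> z = 0.
Proof. by move=> h; apply/normr0_eq0; rewrite normE h. Qed.

Lemma nm_sum (I : finType) (f : I -> R[i]) : nm (\sum_i f i) <= \sum_i nm (f i).
Proof.
have := ler_norm_sum (index_enum I) f xpredT.
have e : \sum_i `|f i| = (\sum_i nm (f i))%:C.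
  by rewrite rmorph_sum; apply: eq_bigr => i _; rewrite normE.
by rewrite normE e lecR.
Qed.

Lemma eig_cw {n} {B : 'M[R]_n} {mu : R[i]} : (forall i j, 0 <= B i j) ->
  eigenvalue (map_mx (real_complex R) B) mu ->
  exists w : 'rV[R]_n, (forall j, 0 <= w ord0 j) /\ w != 0 /\ cw B w (nm mu).
Proof.
move=> B0 /eigenvalueP [v hv vn0].
exists (\row_j nm (v ord0 j)); split; [|split].
- by move=> j; rewrite mxE nm_ge0.
- have [j hj] := row_nz vn0; apply/negP => /eqP/rowP/(_ j); rewrite !mxE.
  by move/nm_eq0/eqP; rewrite (negPf hj).
- move=> j; rewrite mxE -nmM.
  have -> : mu * v ord0 j = (v *m map_mx (real_complex R) B) ord0 j by rewrite hv mxE.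
  rewrite !mxE; apply: (le_trans (nm_sum _ _)); apply: ler_sum => i _.
  by rewrite nmM !mxE nm_real.
Qed.

End Cplx.
Section Topo.
Context {R : realType}.
Context {k : nat}.
Local Notation T := ('rV[R]_k * R)%type.

Lemma fst_cont : continuous (fun w : T => w.1).
Proof. move=> x; exact: cvg_fst. Qed.
Lemma snd_cont : continuous (fun w : T => w.2).
Proof. move=> x; exact: cvg_snd. Qed.
Lemma crd_cont j : continuous (fun w : T => w.1 ord0 j).
Proof. move=> x; exact: (continuous_comp (fst_cont x) (@coord_continuous R 1 k ord0 j x.1)). Qed.

Lemma sum_cont (I : Type) (r : seq I) (P : pred I) (f : I -> T -> R) :
  (forall i, continuous (f i)) -> continuous (fun w => \sum_(i <- r | P i) f i w).
Proof.
move=> fc; elim: r => [|a r IH].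
  move=> x; under eq_fun do rewrite big_nil; exact: cst_continuous.
move=> x; under eq_fun do rewrite big_cons.
case: (P a).
  exact: (continuousD (fc a x) (IH x)).
exact: IH.
Qed.

Lemma mul_cont (f g : T -> R) : continuous f -> continuous g -> continuous (fun w => f w * g w).
Proof. move=> fc gc x; exact: (continuousM (fc x) (gc x)). Qed.
Lemma sub_cont (f g : T -> R) : continuous f -> continuous g -> continuous (fun w => f w - g w).
Proof. move=> fc gc x; exact: (continuousB (fc x) (gc x)). Qed.
Lemma add_cont (f g : T -> R) : continuous f -> continuous g -> continuous (fun w => f w + g w).
Proof. move=> fc gc x; exact: (continuousD (fc x) (gc x)). Qed.

Lemma closed_ge0 (f : T -> R) : continuous f -> closed [set w | 0 <= f w].
Proof.
move=> fc; have -> : [set w | 0 <= f w] = f @^-1` [set x | 0 <= x] by [].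
apply: preimage_closed; first by move=> x _; exact: fc.
exact: closed_ge.
Qed.

Lemma closed_eq0 (f : T -> R) : continuous f -> closed [set w | f w = 0].
Proof.
move=> fc; have -> : [set w | f w = 0] = f @^-1` [set x | x = 0] by [].
apply: preimage_closed; first by move=> x _; exact: fc.
exact: closed_eq.
Qed.

Lemma closed_all (I : Type) (A : I -> set T) : (forall i, closed (A i)) ->
  closed [set w | forall i, A i w].
Proof.
move=> Ac; have -> : [set w | forall i, A i w] = \bigcap_(i in setT) A i.
  by apply/seteqP; split => w /= H i //; apply: H.
by apply: closed_bigI => i _; exact: Ac.
Qed.

Lemma closed_lef (f g : T -> R) : continuous f -> continuous g ->
  closed [set w | f w <= g w].
Proof.
move=> fc gc; have -> : [set w | f w <= g w] = [set w | 0 <= g w - f w].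
  by apply/seteqP; split => w /=; rewrite subr_ge0.
by apply: closed_ge0; apply: sub_cont.
Qed.

Lemma closed_eqf (f g : T -> R) : continuous f -> continuous g ->
  closed [set w | f w = g w].
Proof.
move=> fc gc; have -> : [set w | f w = g w] = [set w | g w - f w = 0].
  by apply/seteqP; split => w /=; [move=> ->; rewrite subrr | move/eqP; rewrite subr_eq0 => /eqP].
by apply: closed_eq0; apply: sub_cont.
Qed.

Lemma mulmx_cont (C : 'M[R]_k) j : continuous (fun w : T => (w.1 *m C) ord0 j).
Proof.
have -> : (fun w : T => (w.1 *m C) ord0 j) = (fun w => \sum_i w.1 ord0 i * C i j).
  by apply: funext => w; rewrite mxE.
apply: sum_cont => i; apply: mul_cont; [exact: crd_cont | exact: cst_continuous].
Qed.

Lemma box_compact (M : R) : compact ([set x : 'rV[R]_k | forall i, x ord0 i \in `[0, 1]%R] `*` `[0, M]%classic).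
Proof.
apply: compact_setX; last exact: segment_compact.
have h : compact [set v : 'rV[R]_k | forall i, v ord0 i \in `[(0:R), 1]%R].
  by apply: (@rV_compact _  _ (fun=> `[(0:R), 1]%classic)) => _; exact: segment_compact.
exact: h.
Qed.

End Topo.
Section Perron.
Context {R : realType} {n : nat}.
Local Notation T := ('rV[R]_n.+1 * R)%type.

Lemma unif_simplex : simplex (const_mx (n.+1%:R^-1) : 'rV[R]_n.+1).
Proof.
split; first by move=> j; rewrite mxE invr_ge0 ler0n.
under eq_bigr do rewrite mxE.
by rewrite sumr_const card_ord -[_ *+ _]mulr_natl mulfV // pnatr_eq0.
Qed.

Lemma closed_simplex : closed [set w : T | simplex w.1].
Proof.
apply: closedI.
  apply: closed_all => j; apply: (@closed_lef _ _ (fun=> 0)); first exact: cst_continuous.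
  exact: crd_cont.
apply: (@closed_eqf _ _ _ (fun=> 1)); last exact: cst_continuous.
by apply: sum_cont => j; exact: crd_cont.
Qed.

Lemma simplex_box (x : 'rV[R]_n.+1) : simplex x -> forall i, x ord0 i \in `[0, 1]%R.
Proof.
move=> xs i; rewrite in_itv /=; apply/andP; split; first exact: xs.1.
exact: simplex_le1.
Qed.

Lemma perron_pos {C : 'M[R]_n.+1} : (forall i j, 0 < C i j) ->
  exists x lam, [/\ simplex x, x *m C = lam *: x, 0 <= lam &
    forall y t, simplex y -> cw C y t -> t <= lam].
Proof.
move=> Cp; have C0 : forall i j, 0 <= C i j by move=> i j; exact: ltW.
set Tb := \sum_i \sum_j C i j.
pose K := [set w : T | (simplex w.1 /\ (0 <= w.2 /\ w.2 <= Tb)) /\ cw C w.1 w.2].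
have Kc : compact K.
  apply: (subclosed_compact _ (box_compact Tb)).
    apply: closedI; first apply: closedI.
    - exact: closed_simplex.
    - apply: closedI.
        apply: (@closed_lef _ _ (fun=> 0)); [exact: cst_continuous | exact: snd_cont].
      apply: (@closed_lef _ _ _ (fun=> Tb)); [exact: snd_cont | exact: cst_continuous].
    - apply: closed_all => j; apply: closed_lef; last exact: mulmx_cont.
      by apply: mul_cont; [exact: snd_cont | exact: crd_cont].
  move=> w [[ws [w0 wT]] _]; split; first exact: simplex_box.
  by rewrite /= in_itv /= w0 wT.
pose u : 'rV[R]_n.+1 := const_mx (n.+1%:R^-1).
have K0 : K !=set0.
  exists (u, 0); split; first split; first exact: unif_simplex.
    split => //; rewrite /Tb; apply: sumr_ge0 => i _; apply: sumr_ge0 => j _; exact: C0.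
  move=> j /=; rewrite mul0r mxE; apply: sumr_ge0 => i _.
  by apply: mulr_ge0; [exact: unif_simplex.1 | exact: C0].
have [c cK cmax] := @compact_EVT_max _ _ (fun w : T => w.2) K K0 Kc
  (continuous_subspaceT snd_cont).
move: cK; rewrite inE => -[[cs [c0 cT]] ccw].
have maxK : forall y t, simplex y -> cw C y t -> t <= c.2.
  move=> y t ys yt; case: (leP t 0) => [t0|t0]; first exact: le_trans t0 c0.
  apply: (cmax (y, t)); rewrite inE; split; last exact: yt.
  split; first exact: ys.
  by split; [exact: ltW | rewrite /= /Tb; exact: (cw_bound C0 ys yt)].
exists c.1, c.2; split => //.
set x := c.1; set lam := c.2.
apply/eqP; apply/negPn/negP => neq.
set z := x *m C - lam *: x.
have z0 : forall j, 0 <= z ord0 j.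
  by move=> j; rewrite !mxE subr_ge0; have := ccw j; rewrite mxE.
have zn0 : z != 0 by rewrite subr_eq0.
have [k hk] := row_nz zn0.
have zk : 0 < z ord0 k by rewrite lt_def hk z0.
set y := x *m C.
have [i0 xi0] := simplex_pos cs.
have yp : forall j, 0 < y ord0 j.
  move=> j; rewrite mxE (bigD1 i0) //=; apply: ltr_pwDl; first exact: mulr_gt0.
  by apply: sumr_ge0 => i _; apply: mulr_ge0; [exact: cs.1 | exact: C0].
have zCp : forall j, 0 < (z *m C) ord0 j.
  move=> j; rewrite mxE (bigD1 k) //=; apply: ltr_pwDl; first exact: mulr_gt0.
  by apply: sumr_ge0 => i _; apply: mulr_ge0; [exact: z0 | exact: C0].
have yid : forall j, (y *m C) ord0 j = lam * y ord0 j + (z *m C) ord0 j.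
  move=> j; have -> : z *m C = y *m C - lam *: y by rewrite /z mulmxBl -scalemxAl.
  rewrite !mxE; lra.
pose del j := (z *m C) ord0 j / y ord0 j.
have [j0 _ hmin] := @arg_minP _ _ _ ord0 xpredT del isT.
have d0 : 0 < del j0 by apply: divr_gt0.
have ycw : cw C y (lam + del j0).
  move=> j; rewrite mulrDl yid lerD2l.
  have -> : (z *m C) ord0 j = del j * y ord0 j by rewrite /del divfK // gt_eqF.
  by apply: ler_wpM2r; [exact: ltW | exact: hmin].
have yn0 : y != 0.
  by apply/negP => /eqP/rowP/(_ i0) => h; move: (yp i0); rewrite h mxE ltxx.
have [y' [y's y'cw]] := normalize (fun j => ltW (yp j)) yn0 ycw.
have := maxK _ _ y's y'cw.
by rewrite -[leRHS]addr0 lerD2l leNgt d0.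
Qed.

End Perron.
Section Weak.
Context {R : realType} {n : nat}.
Local Notation T := ('rV[R]_n.+1 * R)%type.
Local Open Scope complex_scope.

Lemma simplex_nz (x : 'rV[R]_n.+1) : simplex x -> x != 0.
Proof.
move=> xs; have [i hi] := simplex_pos xs.
by apply/negP => /eqP/rowP/(_ i) => h; move: hi; rewrite h mxE ltxx.
Qed.

Lemma pf_weak {B : 'M[R]_n.+1} : (forall i j, 0 <= B i j) ->
  exists x, simplex x /\ x *m B = spectral_radius B *: x.
Proof.
move=> B0.
pose Ev := [set nm l | l in [set l : R[i] | eigenvalue (map_mx (real_complex R) B) l]].
have rhoE : spectral_radius B = sup Ev by [].
set rho := spectral_radius B.
pose Ce (e : R) : 'M[R]_n.+1 := \matrix_(i, j) (B i j + e).
have cwCe : forall e y t, 0 <= e -> simplex y -> cw B y t -> cw (Ce e) y t.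
  move=> e y t e0 ys yt j; apply: (le_trans (yt j)); rewrite !mxE.
  apply: ler_sum => i _; rewrite mxE; apply: ler_wpM2l; first exact: ys.1.
  by rewrite lerDl.
have eig_simplex : forall l, eigenvalue (map_mx (real_complex R) B) l ->
    exists y, simplex y /\ cw B y (nm l).
  move=> l hl; have [w [w0 [wn0 wcw]]] := eig_cw B0 hl.
  exact: normalize w0 wn0 wcw.
have rho_le : forall lam, 0 <= lam ->
    (forall y t, simplex y -> cw B y t -> t <= lam) -> rho <= lam.
  move=> lam l0 H; rewrite /rho rhoE.
  case: (pselect (exists l, eigenvalue (map_mx (real_complex R) B) l)) => [[l hl]|nE].
    apply: ge_sup; first by exists (nm l); exists l.
    move=> _ [l' hl' <-]; have [y [ys ycw]] := eig_simplex l' hl'.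
    exact: H ys ycw.
  have -> : Ev = set0.
    by apply/seteqP; split => // r [l hl _]; exfalso; apply: nE; exists l.
  by rewrite sup0.
have Ev_ub : has_ubound Ev.
  exists (\sum_i \sum_j B i j) => _ [l hl <-].
  have [y [ys ycw]] := eig_simplex l hl; exact: cw_bound B0 ys ycw.
pose F (w : T) j := \sum_i w.1 ord0 i * (B i j + w.2).
pose s (w : T) := \sum_j F w j.
have Fc : forall j, continuous (fun w => F w j).
  move=> j; apply: sum_cont => i; apply: mul_cont; first exact: crd_cont.
  by apply: add_cont; [exact: cst_continuous | exact: snd_cont].
have sc : continuous s by apply: sum_cont => j; exact: Fc.
pose G := [set w : T | (simplex w.1 /\ (0 <= w.2 /\ w.2 <= 1)) /\
   ((forall j, F w j = s w * w.1 ord0 j) /\ rho <= s w)].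
have Gc : compact G.
  apply: (subclosed_compact _ (box_compact 1)).
    apply: closedI; first apply: closedI.
    - exact: closed_simplex.
    - apply: closedI.
        apply: (@closed_lef _ _ (fun=> 0)); [exact: cst_continuous | exact: snd_cont].
      apply: (@closed_lef _ _ _ (fun=> 1)); [exact: snd_cont | exact: cst_continuous].
    - apply: closedI.
        apply: closed_all => j; apply: closed_eqf; first exact: Fc.
        by apply: mul_cont; [exact: sc | exact: crd_cont].
      apply: (@closed_lef _ _ (fun=> rho)); [exact: cst_continuous | exact: sc].
  move=> w [[ws [w0 wT]] _]; split; first exact: simplex_box.
  by rewrite /= in_itv /= w0 wT.
have pointG : forall e, 0 < e -> e <= 1 -> exists x, G (x, e).
  move=> e e0 e1.
  have Cp : forall i j, 0 < Ce e i j by move=> i j; rewrite mxE; have := B0 i j; lra.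
  have [x [lam [xs xe l0 lmax]]] := perron_pos Cp.
  have Fe : forall j, F (x, e) j = lam * x ord0 j.
    move=> j; have := congr1 (fun M : 'rV[R]_n.+1 => M ord0 j) xe; rewrite !mxE => <-.
    by apply: eq_bigr => i _; rewrite mxE.
  have se : s (x, e) = lam.
    rewrite /s; under eq_bigr do rewrite Fe; by rewrite -mulr_sumr xs.2 mulr1.
  exists x; split; first by split => //; split; [exact: ltW|].
  split; first by move=> j; rewrite Fe se.
  rewrite se; apply: rho_le => // y t ys yt.
  by apply: lmax ys (cwCe e y t (ltW e0) ys yt).
have G0 : G !=set0 by have [x hx] := pointG 1 ltr01 (lexx _); exists (x, 1).
have [c cG cmin] := @compact_EVT_min _ _ (fun w : T => w.2) G G0 Gc
  (continuous_subspaceT snd_cont).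
move: cG; rewrite inE => -[[cs [c0 c1]] [cF crho]].
have c20 : c.2 = 0.
  apply/eqP; rewrite eq_le c0 andbT leNgt; apply/negP => cp.
  have c21 : c.2 / 2 <= 1 by have := c1; lra.
  have [x hx] := pointG (c.2 / 2) (divr_gt0 cp (ltr0Sn _ 1)) c21.
  have := cmin (x, c.2 / 2); rewrite inE => /(_ hx) /=; lra.
set x := c.1.
have xB : x *m B = s c *: x.
  apply/rowP => j; rewrite !mxE -cF /F c20; apply: eq_bigr => i _; by rewrite addr0.
have s0 : 0 <= s c.
  apply: sumr_ge0 => j _; apply: sumr_ge0 => i _; apply: mulr_ge0; first exact: cs.1.
  by rewrite c20 addr0.
have sEv : Ev (s c).
  exists (s c)%:C; last exact: nm_real.
  apply/eigenvalueP; exists (map_mx (real_complex R) x).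
    by rewrite -map_mxM xB map_mxZ.
  by rewrite map_mx_eq0 simplex_nz.
have sle : s c <= rho by rewrite /rho rhoE; exact: ub_le_sup.
exists x; split => //.
by rewrite xB (_ : s c = rho) //; apply/eqP; rewrite eq_le sle crho.
Qed.

End Weak.
Lemma big_opt (V : nmodType) (T : finType) (F : option T -> V) :
  \sum_(y : option T) F y = F None + \sum_(i : T) F (Some i).
Proof.
have -> : \sum_(i : T) F (Some i) = \sum_(y <- map Some (index_enum T)) F y.
  by rewrite big_map.
have -> : F None + \sum_(y <- map Some (index_enum T)) F y =
   \sum_(y <- None :: map Some (index_enum T)) F y by rewrite big_cons.
apply: perm_big; apply: uniq_perm.
- exact: index_enum_uniq.
- rewrite /= map_inj_uniq ?index_enum_uniq ?andbT; last by move=> a b [].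
  by apply/mapP => -[].
- case=> [i|]; rewrite mem_index_enum ?inE //.
  by rewrite map_f ?mem_index_enum ?orbT.
Qed.
Theorem lemma9 (R : realType) (S A : nat) (hS : (0 < S)%N) (beta : R)
    (hbeta : 0 < beta)
    (p r : 'I_S -> 'I_A -> option 'I_S -> R)
    (hp : is_transition p) (htr : transient p)
    (d : 'I_S -> 'I_A -> R) (hd : is_decision_rule d) :
  exists f : 'cV[R]_S,
    [/\ forall i, 0 <= f i 0,
        f != 0,
        (f^T *m Bmat beta p r d = spectral_radius (Bmat beta p r d) *: f^T)
      & 0 < (f^T *m bvec beta p r d) 0 0].
Proof.
case: S hS p r hp htr d hd => [//|n] _ p r hp htr d hd.
set B := Bmat beta p r d; set b := bvec beta p r d.
have B0 : forall i j, 0 <= B i j.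
  move=> i j; rewrite mxE; apply: sumr_ge0 => a _; apply: mulr_ge0; last exact: expR_ge0.
  by apply: mulr_ge0; [exact: hp.1 | exact: hd.1].
have b0 : forall i, 0 <= b i 0.
  move=> i; rewrite mxE; apply: sumr_ge0 => a _; apply: mulr_ge0; last exact: expR_ge0.
  by apply: mulr_ge0; [exact: hp.1 | exact: hd.1].
have [x [xs xB]] := pf_weak B0.
have x0 := xs.1.
exists x^T; rewrite trmxK; split.
- by move=> i; rewrite mxE; exact: x0.
- by rewrite -trmx0 (inj_eq (@trmx_inj _ _ _)) simplex_nz.
- exact: xB.
rewrite lt_def; apply/andP; split; last first.
  by rewrite mxE; apply: sumr_ge0 => i _; apply: mulr_ge0.
apply/negP => /eqP xb0.
have hb : forall s, 0 < x ord0 s -> forall a, p s a None * d s a = 0.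
  move=> s xsp a.
  have h1 : x ord0 s * b s 0 = 0.
    apply: (@psumr_eq0P _ _ xpredT (fun i => x ord0 i * b i 0)) => //.
    - by move=> i _; exact: mulr_ge0.
    - by move: xb0; rewrite mxE.
  have h2 : b s 0 = 0 by move/eqP: h1; rewrite mulf_eq0 (gt_eqF xsp) /= => /eqP.
  have h3 : p s a None * d s a * expR (- (beta * r s a None)) = 0.
    apply: (@psumr_eq0P _ _ xpredT
      (fun a => p s a None * d s a * expR (- (beta * r s a None)))) => //.
    - move=> a' _; apply: mulr_ge0; last exact: expR_ge0.
      by apply: mulr_ge0; [exact: hp.1|exact: hd.1].
    - by move: h2; rewrite mxE.
  by move/eqP: h3; rewrite mulf_eq0 (gt_eqF (expR_gt0 _)) orbF => /eqP.
have hB : forall s s', 0 < x ord0 s -> x ord0 s' = 0 ->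
    forall a, p s a (Some s') * d s a = 0.
  move=> s s' xsp xs' a.
  have e1 : (x *m B) ord0 s' = 0 by rewrite xB mxE xs' mulr0.
  have h1 : x ord0 s * B s s' = 0.
    apply: (@psumr_eq0P _ _ xpredT (fun i => x ord0 i * B i s')) => //.
    - by move=> i _; exact: mulr_ge0.
    - by move: e1; rewrite mxE.
  have h2 : B s s' = 0 by move/eqP: h1; rewrite mulf_eq0 (gt_eqF xsp) /= => /eqP.
  have h3 : p s a (Some s') * d s a * expR (- (beta * r s a (Some s'))) = 0.
    apply: (@psumr_eq0P _ _ xpredT
      (fun a => p s a (Some s') * d s a * expR (- (beta * r s a (Some s'))))) => //.
    - move=> a' _; apply: mulr_ge0; last exact: expR_ge0.
      by apply: mulr_ge0; [exact: hp.1|exact: hd.1].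
    - by move: h2; rewrite mxE.
  by move/eqP: h3; rewrite mulf_eq0 (gt_eqF (expR_gt0 _)) orbF => /eqP.
have hpol : forall s, exists a, 0 < d s a.
  move=> s; case/boolP: [exists a, 0 < d s a] => [/existsP[a ha]|/existsPn H].
    by exists a.
  exfalso; have : \sum_a d s a = 0.
    apply: big1 => a _; apply/eqP; rewrite eq_le (hd.1 s a) andbT.
    by move: (H a); rewrite -leNgt.
  by rewrite hd.2 => /eqP; rewrite oner_eq0.
pose pol s := xchoose (hpol s).
have polp : forall s, 0 < d s (pol s) := fun s => xchooseP (hpol s).
have pN : forall s, 0 < x ord0 s -> p s (pol s) None = 0.
  move=> s hs; move/eqP: (hb s hs (pol s)).
  by rewrite mulf_eq0 (gt_eqF (polp s)) orbF => /eqP.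
have pS : forall s s', 0 < x ord0 s -> x ord0 s' = 0 -> p s (pol s) (Some s') = 0.
  move=> s s' hs hs'; move/eqP: (hB s s' hs hs' (pol s)).
  by rewrite mulf_eq0 (gt_eqF (polp s)) orbF => /eqP.
have [s0 hs0] := simplex_pos xs.
pose D t y := state_dist p pol s0 t y.
have DS : forall t y, D t.+1 y =
    \sum_s D t (Some s) * p s (pol s) y + D t None * (y == None)%:R.
  by move=> t y; rewrite /D /= big_opt addrC.
have D0 : forall y, D 0 y = (y == Some s0)%:R by [].
have Dge0 : forall t y, 0 <= D t y.
  elim=> [|t IH] y; first by rewrite D0 ler0n.
  rewrite DS; apply: addr_ge0; last by apply: mulr_ge0; [exact: IH | exact: ler0n].
  by apply: sumr_ge0 => s _; apply: mulr_ge0; [exact: IH | exact: hp.1].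
have Dinv : forall t, [/\ D t None = 0,
    (forall s', x ord0 s' = 0 -> D t (Some s') = 0) &
    \sum_s' D t (Some s') = 1].
  elim=> [|t [IHN IHS IHsum]].
    split; first by rewrite D0.
      move=> s' h; rewrite D0; case: eqP => // -[e].
      by move: hs0; rewrite -e h ltxx.
    rewrite (bigD1 s0) //= D0 eqxx big1 ?addr0 // => s' ne.
    by rewrite D0; case: eqP => // -[e]; rewrite e eqxx in ne.
  have key : forall y, (y = None \/ exists s', y = Some s' /\ x ord0 s' = 0) ->
      forall s, D t (Some s) * p s (pol s) y = 0.
    move=> y hy s; case: (eqVneq (x ord0 s) 0) => [h|h]; first by rewrite IHS // mul0r.
    have xsp : 0 < x ord0 s by rewrite lt_def h x0.
    case: hy => [->|[s' [-> hs']]]; first by rewrite pN // mulr0.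
    by rewrite pS // mulr0.
  split.
  - rewrite DS IHN mul0r addr0; apply: big1 => s _; apply: key; by left.
  - move=> s' hs'; rewrite DS IHN mul0r addr0; apply: big1 => s _; apply: key.
    by right; exists s'.
  - rewrite (eq_bigr (fun s' => \sum_s D t (Some s) * p s (pol s) (Some s'))); last first.
      by move=> s' _; rewrite DS IHN mul0r addr0.
    rewrite exchange_big /= -IHsum; apply: eq_bigr => s _.
    rewrite -mulr_sumr.
    have hrow : \sum_s' p s (pol s) (Some s') = 1 - p s (pol s) None.
      by move: (hp.2 s (pol s)); rewrite big_opt => h; rewrite -h; lra.
    by rewrite hrow mulrBr mulr1 (key None (or_introl erefl) s) subr0.
pose L s' := fine (\sum_(0 <= t <oo) (D t (Some s'))%:E)%E.
have HL : forall s' N, \sum_(t < N) D t (Some s') <= L s'.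
  move=> s' N.
  have S0 : (0 <= \sum_(0 <= t <oo) (D t (Some s'))%:E)%E.
    by apply: nneseries_ge0 => t _ _; rewrite lee_fin.
  rewrite -lee_fin /L fineK; last by rewrite ge0_fin_numE //; exact: (htr pol s0 s').
  rewrite -sumEFin -(big_mkord xpredT (fun t => (D t (Some s'))%:E)).
  by apply: nneseries_lim_ge => t _ _; rewrite lee_fin.
pose M := \sum_s' L s'.
have M0 : 0 <= M.
  apply: sumr_ge0 => s' _; apply: le_trans (HL s' 0); by rewrite big_ord0.
pose N := Num.Def.archi_bound M.
have hN := archi_boundP M0.
have : N%:R <= M.
  have -> : N%:R = \sum_(t < N) \sum_s' D t (Some s').
    rewrite (eq_bigr (fun _ => 1)); last by move=> t _; case: (Dinv t).
    by rewrite sumr_const card_ord.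
  rewrite exchange_big /=; apply: ler_sum => s' _; exact: HL.
by rewrite leNgt hN.
Qed.
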